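(* Let $\mathcal{A}$ be a separating union-closed family with base set $[n]$ and height $h$, and suppose $h = 4 \leq n$ and $0 \leq |\mathcal{B}(\mathcal{A})| \leq 2$. Then there exists an element of $[n]$ that is contained in at least $\frac{|\mathcal{A}|}{2}$ member sets of $\mathcal{A}$.
   Context: A family of sets $\mathcal{A}$ is union-closed if it is a finite family of distinct finite sets with at least one nonempty member set, and $X,Y\in\mathcal{A}$ implies $X\cup Y\in\mathcal{A}$ (the empty set may be a member). For a family $\mathcal{F}$, $b(\mathcal{F})=\bigcup_{F\in\mathcal{F}}F$; the base set $b(\mathcal{A})$ is denoted $[n]=\{1,\dots,n\}$. $\mathcal{A}$ is separating if for any two distinct $x,y\in[n]$ there is $A\in\mathcal{A}$ containing exactly one of $x,y$. A chain in $\mathcal{A}$ is a subfamily any two distinct members of which are comparable under proper inclusion; the height $h$ of $\mathcal{A}$ is the maximum size of a chain in $\mathcal{A}$. For real $x\ge 0$, $\mathcal{A}_{<x}=\{A\in\mathcal{A} : |A|<x\}$. For $\mathcal{S}\subseteq\mathcal{A}$ and $S\in\mathcal{S}$, $\mathrm{irr}_{\mathcal{S}}(S)=\{s\in S : s\notin b(\mathcal{S}\setminus\{S\})\}$, and $\mathcal{S}$ is irredundant if $\mathrm{irr}_{\mathcal{S}}(S)\neq\emptyset$ for every $S\in\mathcal{S}$. Set $B=b(\mathcal{A}_{<n/2})$, and let $\mathcal{B}=\mathcal{B}(\mathcal{A})$ denote any irredundant subfamily of $\mathcal{A}_{<n/2}$ of minimum size such that $b(\mathcal{B})=B$. *)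

(* Defs.v *)
(* A family of sets over base set [n] is modelled as
   F : {set {set 'I_n}}, the elements of [n] being the ordinals 0..n-1. *)
From mathcomp Require Import all_boot all_order.
Set Implicit Arguments. Unset Strict Implicit. Unset Printing Implicit Defensive.

Section Defs.
Variable n : nat.
Implicit Types (F S C : {set {set 'I_n}}) (X Y : {set 'I_n}).

Definition bset F : {set 'I_n} := \bigcup_(X in F) X.

Definition union_closed F : Prop :=
  (exists2 X, X \in F & X != set0) /\
  (forall X Y, X \in F -> Y \in F -> X :|: Y \in F).

Definition base_is_n F : Prop := bset F = [set: 'I_n].

Definition separating F : Prop :=
  forall x y : 'I_n, x != y -> exists2 X, X \in F & (x \in X) != (y \in X).

Definition is_chain C : bool :=
  [forall X in C, forall Y in C, (X \subset Y) || (Y \subset X)].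

Definition height F : nat :=
  \max_(C in powerset F | is_chain C) #|C|.

Definition small F : {set {set 'I_n}} := [set X in F | 2 * #|X| < n].

Definition irr S X : {set 'I_n} := X :\: bset (S :\ X).

Definition irredundant S : bool := [forall X in S, irr S X != set0].

(* S is a valid choice of B(F): an irredundant subfamily of F_{<n/2} whose
   union is B = b(F_{<n/2}), of minimum size among all such subfamilies *)
Definition is_calB F S : Prop :=
  [/\ S \subset small F, irredundant S, bset S = bset (small F) &
      forall S', S' \subset small F -> irredundant S' ->
                 bset S' = bset (small F) -> #|S| <= #|S'| ].
End Defs.

(* Main.v *)
Require Import Defs.
From mathcomp Require Import all_boot all_order zify.
Set Implicit Arguments. Unset Strict Implicit. Unset Printing Implicit Defensive.

Definition ucl n (A : {set {set 'I_n}}) :=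
  forall X Y, X \in A -> Y \in A -> X :|: Y \in A.

Definition no5 n (A : {set {set 'I_n}}) :=
  forall X1 X2 X3 X4 X5, X1 \in A -> X2 \in A -> X3 \in A -> X4 \in A -> X5 \in A ->
  X1 \proper X2 -> X2 \proper X3 -> X3 \proper X4 -> X4 \proper X5 -> False.

Lemma proper_neq n (X Y : {set 'I_n}) : X \proper Y -> (X == Y) = false.
Proof. by move=> h; apply/negbTE; move: h; rewrite properEneq => /andP[]. Qed.

Lemma height_no5 n (A : {set {set 'I_n}}) : height A = 4 -> no5 A.
Proof.
move=> hh X1 X2 X3 X4 X5 i1 i2 i3 i4 i5 p12 p23 p34 p45.
have p13 := proper_trans p12 p23. have p14 := proper_trans p13 p34.
have p15 := proper_trans p14 p45. have p24 := proper_trans p23 p34.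
have p25 := proper_trans p24 p45. have p35 := proper_trans p34 p45.
pose C := [set X | X \in [:: X1; X2; X3; X4; X5]].
have hC : (C \in powerset A) && is_chain C.
  apply/andP; split.
    rewrite inE; apply/subsetP => X; rewrite !inE.
    by move=> /orP[/eqP->|/orP[/eqP->|/orP[/eqP->|/orP[/eqP->|/eqP->]]]].
  apply/forallP => X; apply/implyP; rewrite !inE => hX.
  apply/forallP => Y; apply/implyP; rewrite !inE => hY.
  have s12 := proper_sub p12. have s13 := proper_sub p13. have s14 := proper_sub p14.
  have s15 := proper_sub p15. have s23 := proper_sub p23. have s24 := proper_sub p24.
  have s25 := proper_sub p25. have s34 := proper_sub p34. have s35 := proper_sub p35.
  have s45 := proper_sub p45.
  by move: hX hY => /orP[/eqP->|/orP[/eqP->|/orP[/eqP->|/orP[/eqP->|/eqP->]]]]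
    /orP[/eqP->|/orP[/eqP->|/orP[/eqP->|/orP[/eqP->|/eqP->]]]];
    rewrite ?subxx ?s12 ?s13 ?s14 ?s15 ?s23 ?s24 ?s25 ?s34 ?s35 ?s45 ?orbT.
have := @leq_bigmax_cond _ (fun C0 => (C0 \in powerset A) && is_chain C0) (fun C0 => #|C0|) C hC.
rewrite -/(height A) hh.
have -> : #|C| = 5.
  rewrite /C cardsE; apply/card_uniqP; rewrite /= !inE.
  rewrite ![X1 == _]proper_neq // ![X2 == _]proper_neq // ![X3 == _]proper_neq //.
  by rewrite ![X4 == _]proper_neq.
by [].
Qed.

Lemma bset_in n (A : {set {set 'I_n}}) (F : {set {set 'I_n}}) :
  ucl A -> F \subset A -> F != set0 -> bset F \in A.
Proof.
move=> hu; move: {2}#|F| (leqnn #|F|) => k; elim: k F => [|k IH] F hk hFA hF0.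
  by move: hk; rewrite leqn0 cards_eq0 (negbTE hF0).
case/set0Pn: hF0 => X hX.
rewrite /bset (big_setD1 X hX) /=.
have hXA : X \in A by apply: (subsetP hFA).
case: (boolP (F :\ X == set0)) => [/eqP ->|hne].
  by rewrite big_set0 setU0.
apply: hu => //; apply: IH => //.
  by rewrite -ltnS; apply: leq_trans hk; apply: proper_card; apply: properD1.
by apply: subset_trans hFA; apply: subD1set.
Qed.

Lemma setT_in n (A : {set {set 'I_n}}) : union_closed A -> base_is_n A -> setT \in A.
Proof.
move=> [[X hX _] hu] hb; rewrite -hb; apply: bset_in => //.
by apply/set0Pn; exists X.
Qed.

Lemma lemmaH n (A : {set {set 'I_n}}) V x z :
  ucl A -> separating A -> V \in A -> x != z -> x \notin V -> z \notin V ->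
  exists2 W, W \in A & V \proper W /\
   ((x \in W) && (z \notin W) || (z \in W) && (x \notin W)).
Proof.
move=> hu hs hV hxz hx hz.
case: (hs x z hxz) => X hX hne.
exists (V :|: X); first by apply: hu.
have ex : (x \in V :|: X) = (x \in X) by rewrite inE (negbTE hx).
have ez : (z \in V :|: X) = (z \in X) by rewrite inE (negbTE hz).
rewrite ex ez; split.
  apply/properP; split; first by apply: subsetUl.
  by move: hne; case: (boolP (x \in X)) => hxX; [exists x; rewrite // inE hxX orbT|
     case: (boolP (z \in X)) => // hzX _; exists z; rewrite // inE hzX orbT].
by move: hne; case: (x \in X); case: (z \in X).
Qed.

Lemma one_proper n (X1 X2 : {set 'I_n}) : X1 != X2 ->
  (X1 \proper X1 :|: X2) || (X2 \proper X1 :|: X2).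
Proof.
move=> hne; rewrite !properEneq subsetUl subsetUr !andbT.
case: (boolP (X1 == X1 :|: X2)) => //= /eqP h1.
apply/negP => /eqP h2; move/negP: hne; apply; apply/eqP.
by rewrite h1 {2}h2.
Qed.

Definition sz n (F : {set {set 'I_n}}) := \sum_(X in F) #|X|.

Lemma card_sum n (B : {set 'I_n}) : #|B| = \sum_x (x \in B : nat).
Proof. by rewrite -sum1_card big_mkcond /=; apply: eq_bigr => x _; case: (x \in B). Qed.

Lemma sum_compl n (P : pred {set 'I_n}) (T : {set 'I_n}) :
  (forall X1 X2, P X1 -> P X2 -> X1 != X2 -> T \subset X1 :|: X2) ->
  \sum_(X | P X) #|T :\: X| <= #|T|.
Proof.
move=> hP.
rewrite (eq_bigr (fun X => \sum_x (x \in T :\: X : nat))); last by move=> X _; apply: card_sum.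
rewrite exchange_big /= card_sum; apply: leq_sum => x _.
case: (boolP (x \in T)) => hxT; last first.
  by rewrite big1 // => X _; rewrite inE (negbTE hxT) andbF.
under eq_bigr => X _ do rewrite inE hxT andbT.
have -> : \sum_(X | P X) (x \notin X : nat) = #|[set X | P X && (x \notin X)]|.
  rewrite -sum1_card [RHS]big_mkcond [LHS]big_mkcond /=; apply: eq_bigr => X _.
  by rewrite inE; case: (P X); case: (x \notin X).
apply/card_le1_eqP => X1 X2; rewrite !inE => /andP[h1 n1] /andP[h2 n2].
case: (eqVneq X1 X2) => [-> //|hne]; exfalso.
by have := subsetP (hP _ _ h1 h2 hne) x hxT; rewrite inE (negbTE n1) (negbTE n2).
Qed.

Lemma szID n (F B : {set {set 'I_n}}) : sz F = sz (F :&: B) + sz (F :\: B).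
Proof. by rewrite /sz (big_setID B). Qed.

Lemma large_bound n (F : {set {set 'I_n}}) :
  (forall X, X \in F -> n <= 2 * #|X|) -> n * #|F| <= 2 * sz F.
Proof.
move=> h; rewrite /sz big_distrr /= mulnC -sum_nat_const.
by apply: leq_sum => X hX; apply: h.
Qed.

Lemma sz_compl n (F : {set {set 'I_n}}) (T : {set 'I_n}) :
  (forall X, X \in F -> X \subset T) ->
  sz F + \sum_(X in F) #|T :\: X| = #|F| * #|T|.
Proof.
move=> h; rewrite /sz -big_split /= -sum_nat_const; apply: eq_bigr => X hX.
by rewrite -(cardsID X T) (setIidPr (h X hX)) setDE.
Qed.

Lemma count_le_sum n (F : {set {set 'I_n}}) (T : {set 'I_n}) :
  (forall X, X \in F -> ~~ (T \subset X)) -> #|F| <= \sum_(X in F) #|T :\: X|.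
Proof.
move=> h; rewrite -sum1_card; apply: leq_sum => X hX.
rewrite card_gt0; apply/set0Pn; case/subsetPn: (h X hX) => x hx hnx.
by exists x; rewrite inE hx hnx.
Qed.

Lemma sz_set1 n (Y : {set 'I_n}) : sz [set Y] = #|Y|.
Proof. by rewrite /sz big_set1. Qed.

Lemma final n (A : {set {set 'I_n}}) : 0 < n -> n * #|A| <= 2 * sz A ->
  exists x : 'I_n, #|A| <= 2 * #|[set X in A | x \in X]|.
Proof.
move=> hn h.
have dc : sz A = \sum_x #|[set X in A | x \in X]|.
  rewrite /sz; under eq_bigr => X _ do rewrite card_sum.
  rewrite exchange_big /=; apply: eq_bigr => x _.
  rewrite -sum1_card big_mkcond /= [in RHS]big_mkcond /=; apply: eq_bigr => X _.
  by rewrite inE; case: (X \in A); case: (x \in X).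
case: (boolP [exists x : 'I_n, #|A| <= 2 * #|[set X in A | x \in X]|]).
  by case/existsP => x hx; exists x.
rewrite negb_exists => /forallP hall.
have : 2 * sz A <= n * (#|A|.-1).
  rewrite dc big_distrr /= -[n in n * _]card_ord -sum_nat_const.
  apply: leq_sum => x _; have := hall x; rewrite -ltnNge.
  by case: #|A| => // m; rewrite ltnS.
have hA : 0 < #|A|.
  by move: (hall (Ordinal hn)); rewrite -ltnNge; case: #|A|.
move: h; case: #|A| hA => // m _; nia.
Qed.

Lemma split1 n (F : {set {set 'I_n}}) Y : Y \in F ->
  sz F = #|Y| + sz (F :\ Y) /\ #|F| = (#|F :\ Y|).+1.
Proof. by move=> h; rewrite /sz (big_setD1 Y h) (cardsD1 Y F) h. Qed.

Lemma splitB n (F B : {set {set 'I_n}}) :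
  sz F = sz (F :&: B) + sz (F :\: B) /\ #|F| = #|F :&: B| + #|F :\: B|.
Proof. by rewrite (szID F B) cardsID. Qed.

Lemma cos_eq n (V : {set 'I_n}) x : #|~: V| <= 1 -> x \notin V -> V = ~: [set x].
Proof.
move=> h hx; apply/setP => z; rewrite !inE.
case: (boolP (z \in V)) => hz.
  by apply/esym/eqP => e; move: hx; rewrite -e hz.
apply/esym/negbF/eqP; move/card_le1_eqP: h; apply; by rewrite inE.
Qed.

Lemma arithI (n y d s szD e szE c szL2 l2 t : nat) :
 szD + s = d*y -> s <= y -> d <= s -> 2*szE + e = n*e -> e <= c -> n * l2 <= 2*szL2 ->
 t <= c -> n <= t+1+y -> 2*y < n -> 0 < y -> 4 <= n ->
 n*(d + e + c + l2 + 2) <= 2*(y + szD + szE + n + c*(n-1) + szL2).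
Proof.
move=> h1 h2 h3 h4 h5 h6 h7 h8 h9 h10 h11.
have k1 : d * (n - 2*y) <= y * (n - 2*y) by apply: leq_mul => //; lia.
have k2 : (n - y - 1) * (n - 3) <= c * (n - 3) by apply: leq_mul => //; lia.
have k3 : y * (n - 2*y) <= (n - y - 1) * (n - 3).
  case: (ltnP 1 y) => hy.
    by apply: leq_mul; lia.
  have -> : y = 1 by lia.
  rewrite mul1n; apply: (@leq_trans ((n-2) * 1)); first by lia.
  by apply: leq_mul; lia.
have K : d * (n - 2*y) <= c * (n-3) by apply: (leq_trans k1); apply: (leq_trans k3).
move: K; rewrite !mulnBr => K.
have e1 : d * (2*y) = 2 * (d*y) by rewrite mulnCA.
rewrite e1 in K.
lia.
Qed.

Lemma caseI n (A : {set {set 'I_n}}) Y X0 : 4 <= n -> ucl A -> separating A ->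
  setT \in A -> no5 A -> Y \in A -> 2 * #|Y| < n -> X0 \in A -> X0 \proper Y ->
  n * #|A| <= 2 * sz A.
Proof.
move=> n4 hu hs hT h5 hY hYs hX0 pX0.
have y1 : 0 < #|Y| by apply: leq_ltn_trans (proper_card pX0).
have cY : #|Y| + #|~: Y| = n by rewrite cardsC card_ord.
have hYT : Y != setT.
  by apply/negP => /eqP e; move: hYs; rewrite e cardsT card_ord; lia.
have [W0 hW0 [pW0 hW0T]] : exists2 W, W \in A & Y \proper W /\ W \proper setT.
  have : 1 < #|~: Y| by clear -cY hYs n4; lia.
  case/card_gt1P => a [b [ha hb hab]]; rewrite !inE in ha hb.
  case: (lemmaH hu hs hY hab ha hb) => W hW [pW hab2].
  exists W => //; split => //; rewrite properT; apply/negP => /eqP e.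
  by move: hab2; rewrite e !inE.
have F3 : forall V, V \in A -> Y \proper V -> #|~: V| <= 1.
  move=> V hV pV; rewrite leqNgt; apply/negP => /card_gt1P [a [b [ha hb hab]]].
  rewrite !inE in ha hb.
  case: (lemmaH hu hs hV hab ha hb) => W hW [pW hab2].
  have pWT : W \proper setT.
    by rewrite properT; apply/negP => /eqP e; move: hab2; rewrite e !inE.
  exact: (h5 _ _ _ _ _ hX0 hY hV hW hT pX0 pV pW pWT).
have F4 : forall X1 X2, X1 \in A -> X2 \in A -> X1 \proper Y -> X2 \proper Y ->
    X1 != X2 -> Y \subset X1 :|: X2.
  move=> X1 X2 h1 h2 p1 p2 hne.
  case: (boolP (Y \subset X1 :|: X2)) => // hn; exfalso.
  have hV : X1 :|: X2 \in A by apply: hu.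
  have pV : X1 :|: X2 \proper Y.
    by rewrite properE subUset (proper_sub p1) (proper_sub p2) hn.
  case/orP: (one_proper hne) => pp.
    exact: (h5 _ _ _ _ _ h1 hV hY hW0 hT pp pV pW0 hW0T).
  exact: (h5 _ _ _ _ _ h2 hV hY hW0 hT pp pV pW0 hW0T).
pose T' := [set x | ~: [set x] \in A].
pose Cset := [set X in A | #|~: X| == 1].
have F5 : #|~: Y :\: T'| <= 1.
  apply/card_le1_eqP => a b; rewrite !inE => /andP[na ya] /andP[nb yb].
  case: (eqVneq a b) => // hab; exfalso.
  case: (lemmaH hu hs hY hab ya yb) => W hW [pW hab2].
  case/orP: hab2 => /andP[_ hn].
    by move: nb; rewrite -(cos_eq (F3 W hW pW) hn) hW.
  by move: na; rewrite -(cos_eq (F3 W hW pW) hn) hW.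
have hTc : n <= #|~: Y :&: T'| + 1 + #|Y|.
  by have := cardsID T' (~: Y); clear -F5 cY; lia.
have F7 : #|~: Y :&: T'| <= #|Cset|.
  rewrite -(card_in_imset (f := fun x => ~: [set x])); last first.
    by move=> a b _ _ /setC_inj /set1_inj.
  apply: subset_leq_card; apply/subsetP => X /imsetP [x hx ->].
  move: hx; rewrite !inE => /andP[_ ->] /=.
  by rewrite setCK cards1.
have F6 : forall Z, Z \in A -> 2 * #|Z| < n -> ~~ (Z \subset Y) ->
    [/\ 2 * #|Z| + 1 = n, Z :&: Y = set0 & Z :|: Y \in Cset].
  move=> Z hZ hZs hZY.
  have hV : Z :|: Y \in A by apply: hu.
  have pV : Y \proper Z :|: Y.
    by rewrite properE subsetUr /= subUset subxx andbT.
  have h1 : #|~: (Z :|: Y)| <= 1 := F3 _ hV pV.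
  have h2 : #|Z :|: Y| + #|~: (Z :|: Y)| = n by rewrite cardsC card_ord.
  have h3 := cardsUI Z Y.
  have e1 : #|Z :&: Y| = 0 by clear -h1 h2 h3 hZs hYs; lia.
  split; first by clear -h1 h2 h3 hZs hYs; lia.
    by apply/eqP; rewrite -cards_eq0 e1.
  have h4 : #|~: (Z :|: Y)| = 1 by clear -h1 h2 h3 hZs hYs; lia.
  by rewrite /Cset inE hV /= h4.
pose Sub := [set X : {set 'I_n} | X \subset Y].
pose Sm := [set X : {set 'I_n} | 2 * #|X| < n].
pose Co := [set X : {set 'I_n} | #|~: X| == 1].
have [sA cA] := splitB A Sub.
have hY1 : Y \in A :&: Sub by rewrite !inE hY subxx.
have [sA1 cA1] := split1 hY1.
set D := (A :&: Sub) :\ Y in sA1 cA1.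
have [sA2 cA2] := splitB (A :\: Sub) Sm.
set E := (A :\: Sub) :&: Sm in sA2 cA2.
set L := (A :\: Sub) :\: Sm in sA2 cA2.
have hTL : setT \in L.
  rewrite !inE hT /= -leqNgt andbT cardsT card_ord; apply/andP; split; first by clear -n4; lia.
  by apply/negP => hTY; move/negP: hYT; apply; rewrite eqEsubset subsetT.
have [sL cL] := split1 hTL.
have [sL1 cL1] := splitB (L :\ setT) Co.
have eC : (L :\ setT) :&: Co = Cset.
  apply/setP => X; rewrite !inE; apply/idP/idP.
    by case/andP => /and4P [_ _ _ ->] ->.
  case/andP => hXA hc; rewrite hc hXA !andbT.
  have hX : #|X| = n - 1.
    by have := cardsC X; rewrite card_ord (eqP hc) => hh; clear -hh; lia.
  rewrite -leqNgt hX; apply/and3P; split.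
  - by apply/negP => /eqP e; move: hc; rewrite e setCT cards0.
  - by clear -n4; lia.
  - by apply/negP => /subset_leq_card hh; clear -hh hX hYs n4; lia.
rewrite eC in sL1 cL1.
set L2 := (L :\ setT) :\: Co in sL1 cL1.
have fD1 : forall X, X \in D -> X \in A /\ X \proper Y.
  move=> X; rewrite !inE => /andP[hne /andP[hXA hXY]]; split => //.
  by rewrite properEneq hne hXY.
have sD := sz_compl (F := D) (T := Y) (fun X hX => proper_sub (fD1 X hX).2).
have sD2 : \sum_(X in D) #|Y :\: X| <= #|Y|.
  apply: sum_compl => X1 X2 h1 h2 hne.
  by have [a1 b1] := fD1 _ h1; have [a2 b2] := fD1 _ h2; apply: F4.
have sD3 : #|D| <= \sum_(X in D) #|Y :\: X|.
  apply: count_le_sum => X hX; have [_ p] := fD1 _ hX.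
  by move: p; rewrite properE => /andP[].
have fE : forall Z, Z \in E -> [/\ 2 * #|Z| + 1 = n, Z :&: Y = set0 & Z :|: Y \in Cset].
  move=> Z /setIP [/setDP [hZA hnS] hSm]; rewrite inE in hnS; rewrite inE in hSm.
  exact: F6.
have sE : 2 * sz E + #|E| = n * #|E|.
  have h : \sum_(Z in E) (2 * #|Z| + 1) = \sum_(Z in E) n.
    by apply: eq_bigr => Z hZ; have [-> _ _] := fE Z hZ.
  by move: h; rewrite big_split /= -big_distrr sum1_card sum_nat_const /sz => ->; rewrite mulnC.
have cE : #|E| <= #|Cset|.
  rewrite -(card_in_imset (f := fun Z => Z :|: Y)); last first.
    move=> Z1 Z2 h1 h2 e; have [_ d1 _] := fE _ h1; have [_ d2 _] := fE _ h2.
    apply/setP => x; move/setP/(_ x): e; rewrite !inE.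
    case: (boolP (x \in Y)) => hxY; last by rewrite !orbF.
    have n1 : x \notin Z1 by apply/negP => hx; have := in_set0 x; rewrite -d1 inE hx hxY.
    have n2 : x \notin Z2 by apply/negP => hx; have := in_set0 x; rewrite -d2 inE hx hxY.
    by rewrite (negbTE n1) (negbTE n2).
  apply: subset_leq_card; apply/subsetP => X /imsetP [Z hZ ->].
  by have [_ _ ->] := fE Z hZ.
have sC : sz Cset = #|Cset| * (n - 1).
  rewrite /sz -sum_nat_const; apply: eq_bigr => X; rewrite inE => /andP[_ hc].
  by have := cardsC X; rewrite card_ord (eqP hc) => hh; clear -hh; lia.
have sL2 : n * #|L2| <= 2 * sz L2.
  apply: large_bound => X; rewrite !inE => /andP[_ /andP[_ /andP[h _]]].
  by rewrite leqNgt.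
rewrite cardsT card_ord in sL cL.
rewrite cA sA cA1 sA1 cA2 sA2 cL sL cL1 sL1 sC.
have H := arithI sD sD2 sD3 sE cE sL2 F7 hTc hYs y1 n4.
clear -H; lia.
Qed.

Lemma pair_v1 n (A : {set {set 'I_n}}) X0 P1 P2 T :
  no5 A -> ucl A -> setT \in A -> X0 \in A -> P1 \in A -> P2 \in A -> T \in A ->
  T \proper setT -> X0 \proper P1 -> X0 \proper P2 -> P1 != P2 ->
  P1 \subset T -> P2 \subset T -> T \subset P1 :|: P2.
Proof.
move=> h5 hu hT h0 h1 h2 hTA pT p1 p2 hne s1 s2.
case: (boolP (T \subset P1 :|: P2)) => // hn; exfalso.
have hV : P1 :|: P2 \in A by apply: hu.
have pV : P1 :|: P2 \proper T by rewrite properE subUset s1 s2 hn.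
case/orP: (one_proper hne) => pp.
  exact: (h5 _ _ _ _ _ h0 h1 hV hTA hT p1 pp pV pT).
exact: (h5 _ _ _ _ _ h0 h2 hV hTA hT p2 pp pV pT).
Qed.

Lemma pair_v2 n (A : {set {set 'I_n}}) P1 P2 T W :
  no5 A -> ucl A -> setT \in A -> P1 \in A -> P2 \in A -> T \in A -> W \in A ->
  T \proper W -> W \proper setT -> P1 != P2 ->
  P1 \subset T -> P2 \subset T -> T \subset P1 :|: P2.
Proof.
move=> h5 hu hT h1 h2 hTA hW pT pW hne s1 s2.
case: (boolP (T \subset P1 :|: P2)) => // hn; exfalso.
have hV : P1 :|: P2 \in A by apply: hu.
have pV : P1 :|: P2 \proper T by rewrite properE subUset s1 s2 hn.
case/orP: (one_proper hne) => pp.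
  exact: (h5 _ _ _ _ _ h1 hV hTA hW hT pp pV pT pW).
exact: (h5 _ _ _ _ _ h2 hV hTA hW hT pp pV pT pW).
Qed.

Lemma caseII_le1 n (A : {set {set 'I_n}}) : 0 < n -> setT \in A ->
  (forall Z1 Z2, Z1 \in A -> Z2 \in A -> 2 * #|Z1| < n -> 2 * #|Z2| < n -> Z1 = Z2) ->
  n * #|A| <= 2 * sz A.
Proof.
move=> n0 hT h1.
pose Sm := [set X : {set 'I_n} | 2 * #|X| < n].
have [sA cA] := splitB A Sm.
have cP : #|A :&: Sm| <= 1.
  by apply/card_le1_eqP => Z1 Z2; rewrite !inE => /andP[a1 b1] /andP[a2 b2]; apply: h1.
have hTL : setT \in A :\: Sm by rewrite !inE hT cardsT card_ord andbT -leqNgt; lia.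
have [sL cL] := split1 hTL.
have sL2 : n * #|(A :\: Sm) :\ setT| <= 2 * sz ((A :\: Sm) :\ setT).
  by apply: large_bound => X; rewrite !inE => /andP[_ /andP[h _]]; rewrite leqNgt.
rewrite cardsT card_ord in sL.
rewrite cA sA cL sL.
have H : forall p l szP szL, p <= 1 -> n * l <= 2 * szL ->
    n * (p + l.+1) <= 2 * (szP + (n + szL)).
  move=> p l szP szL hp hl.
  have k : n * p <= n * 1 by apply: leq_mul.
  lia.
by apply: H.
Qed.

Lemma arithIIi (n p u s szP l szL : nat) :
  szP + s = p * u -> s <= u -> n <= 2 * u -> n * l <= 2 * szL ->
  n * (p + (l.+1).+1) <= 2 * (szP + (n + (u + szL))).
Proof.
move=> h1 h2 h3 h4.
have k : n * p <= 2 * u * p by apply: leq_mul.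
lia.
Qed.

Lemma caseII_i n (A : {set {set 'I_n}}) U : setT \in A -> U \in A -> U != setT ->
  n <= 2 * #|U| ->
  (forall Z, Z \in A -> 2 * #|Z| < n -> Z \subset U) ->
  (forall Z1 Z2, Z1 \in A -> Z2 \in A -> 2 * #|Z1| < n -> 2 * #|Z2| < n -> Z1 != Z2 ->
     U \subset Z1 :|: Z2) ->
  n * #|A| <= 2 * sz A.
Proof.
move=> hT hU hUT hUl hsub hpair.
pose Sm := [set X : {set 'I_n} | 2 * #|X| < n].
have [sA cA] := splitB A Sm.
have fP : forall Z, Z \in A :&: Sm -> Z \in A /\ 2 * #|Z| < n.
  by move=> Z; rewrite !inE => /andP[-> ->].
have sP := sz_compl (F := A :&: Sm) (T := U) (fun Z hZ => hsub Z (fP Z hZ).1 (fP Z hZ).2).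
have sP2 : \sum_(Z in A :&: Sm) #|U :\: Z| <= #|U|.
  apply: sum_compl => Z1 Z2 h1 h2 hne.
  by have [a1 b1] := fP _ h1; have [a2 b2] := fP _ h2; apply: hpair.
have hTL : setT \in A :\: Sm.
  by rewrite !inE hT cardsT card_ord andbT -leqNgt; move: hUl; clear; lia.
have [sL cL] := split1 hTL.
have hUL : U \in (A :\: Sm) :\ setT by rewrite !inE hU hUT andbT -leqNgt.
have [sL1 cL1] := split1 hUL.
have sL2 : n * #|(A :\: Sm) :\ setT :\ U| <= 2 * sz ((A :\: Sm) :\ setT :\ U).
  by apply: large_bound => X; rewrite !inE => /andP[_ /andP[_ /andP[h _]]]; rewrite leqNgt.
rewrite cardsT card_ord in sL.
rewrite cA sA cL sL cL1 sL1.
have H := arithIIi sP sP2 hUl sL2.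
clear -H; lia.
Qed.

Lemma arithIIii (n h m szM t b szQ s r szR u : nat) :
  2 * h + 1 = n -> u = 2 * h -> 2 <= h -> n * m <= 2 * szM + 2 * t -> t <= b * h ->
  szQ + s = b * u -> s <= h -> b <= s -> n * r <= 2 * szR ->
  n * (m + b + r + 4) <= 2 * (h + h + szM + n + u + szQ + szR).
Proof.
move=> hn hu h2 h1 h3 h4 h5 h6 h7; subst n u.
lia.
Qed.

Lemma auxM (n s u z d i : nat) : s < u -> u + i = z + s -> i + d = s ->
  2 * s + 1 = n -> n <= 2 * z + 2 * d.
Proof. by move=> *; lia. Qed.

Lemma caseII_ii n (A : {set {set 'I_n}}) S1 S2 : 4 <= n -> no5 A -> ucl A ->
  setT \in A -> S1 \in A -> S2 \in A -> S1 :&: S2 = set0 ->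
  2 * #|S1| + 1 = n -> 2 * #|S2| + 1 = n -> S1 :|: S2 != setT ->
  (forall Z, Z \in A -> 2 * #|Z| < n -> Z \subset S1 :|: S2) ->
  (forall Z X, Z \in A -> 2 * #|Z| < n -> X \in A -> X \proper Z -> False) ->
  n * #|A| <= 2 * sz A.
Proof.
move=> n4 h5 hu hT hS1 hS2 hdis c1 c2 hUT hsub hNB.
set U := S1 :|: S2 in hUT hsub.
have hU : U \in A by apply: hu.
have pUT : U \proper setT by rewrite properT.
have s1 : 2 * #|S1| < n by clear -c1; lia.
have s2 : 2 * #|S2| < n by clear -c2; lia.
have cU : #|U| = #|S1| + #|S2|.
  by have := cardsUI S1 S2; rewrite hdis cards0 addn0.
have nS2 : forall x, x \in S1 -> x \notin S2.
  by move=> x h; apply/negP => h'; have := in_set0 x; rewrite -hdis inE h h'.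
have nS1 : forall x, x \in S2 -> x \notin S1.
  by move=> x h; apply/negP => h'; have := in_set0 x; rewrite -hdis inE h h'.
have mix : forall Z, Z \in A -> 2 * #|Z| < n -> Z != S1 -> Z != S2 ->
   [/\ Z \subset U, ~~ (Z \subset S1), ~~ (Z \subset S2),
       S1 \proper Z :|: S1 & Z :|: S1 \proper U].
  move=> Z hZ hZs n1 n2.
  have zU := hsub Z hZ hZs.
  have z1 : ~~ (Z \subset S1).
    by apply/negP => h; apply: (hNB S1 Z hS1 s1 hZ); rewrite properEneq n1 h.
  have z2 : ~~ (Z \subset S2).
    by apply/negP => h; apply: (hNB S2 Z hS2 s2 hZ); rewrite properEneq n2 h.
  split => //.
    by rewrite properE subsetUr /= subUset subxx andbT.
  rewrite properE subUset zU subsetUl /=; apply/negP => hU1.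
  have sZ : S2 \subset Z.
    apply/subsetP => x hx.
    have : x \in Z :|: S1 by apply: (subsetP hU1); rewrite inE hx orbT.
    by rewrite inE (negbTE (nS1 x hx)) orbF.
  apply: (hNB Z S2 hZ hZs hS2); rewrite properEneq sZ andbT.
  by rewrite eq_sym.
have grp : forall Z1 Z2, Z1 \in A -> 2 * #|Z1| < n -> Z1 != S1 -> Z1 != S2 ->
    Z2 \in A -> 2 * #|Z2| < n -> Z2 != S1 -> Z2 != S2 -> Z1 != Z2 ->
    Z1 :|: S1 = Z2 :|: S1 -> S1 \subset Z1 :|: Z2.
  move=> Z1 Z2 a1 b1 c11 d1 a2 b2 c21 d2 hne e.
  have [u1 x1 y1 _ _] := mix Z1 a1 b1 c11 d1.
  have [u2 x2 y2 _ _] := mix Z2 a2 b2 c21 d2.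
  have p1 : S2 \proper Z1 :|: S2 by rewrite properE subsetUr /= subUset subxx andbT.
  have p2 : S2 \proper Z2 :|: S2 by rewrite properE subsetUr /= subUset subxx andbT.
  have hP : Z1 :|: S2 != Z2 :|: S2.
    apply/negP => /eqP e2; move/negP: hne; apply; apply/eqP/setP => x.
    move/setP/(_ x): e; move/setP/(_ x): e2; rewrite !inE.
    case: (boolP (x \in S1)) => h1.
      by rewrite (negbTE (nS2 x h1)) !orbF.
    by rewrite !orbF => _ ->.
  have := pair_v1 h5 hu hT hS2 (hu _ _ a1 hS2) (hu _ _ a2 hS2) hU pUT p1 p2 hP.
  rewrite !subUset u1 u2 subsetUr => /(_ isT isT) /andP [hsU _].
  apply/subsetP => x hx.
  move/(subsetP hsU): hx (nS2 x hx); rewrite !inE => h hn.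
  by move: h; rewrite (negbTE hn) !orbF.
pose QP := [set Q : {set 'I_n} | (S1 \proper Q) && (Q \proper U)].
have qpair : forall Q1 Q2, Q1 \in A -> Q2 \in A -> Q1 \in QP -> Q2 \in QP -> Q1 != Q2 ->
    S2 \subset Q1 :|: Q2.
  move=> Q1 Q2 a1 a2; rewrite !inE => /andP[p1 q1] /andP[p2 q2] hne.
  have := pair_v1 h5 hu hT hS1 a1 a2 hU pUT p1 p2 hne (proper_sub q1) (proper_sub q2).
  by apply: subset_trans; apply: subsetUr.
have qnot : forall Q, Q \in QP -> ~~ (S2 \subset Q).
  move=> Q; rewrite !inE => /andP[p q]; apply/negP => h.
  have : U \subset Q by rewrite subUset h (proper_sub p).
  by move: q; rewrite properE => /andP[_ /negP].
pose Sm := [set X : {set 'I_n} | 2 * #|X| < n].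
have [sA cA] := splitB A Sm.
have i1 : S1 \in A :&: Sm by rewrite !inE hS1 s1.
have [sP cP] := split1 i1.
have hne12 : S2 != S1.
  apply/negP => /eqP e; move: hdis; rewrite e setIid => e0.
  by move: c1; rewrite e0 cards0; clear -n4; lia.
have i2 : S2 \in (A :&: Sm) :\ S1 by rewrite !inE hne12 hS2 s2.
have [sP1 cP1] := split1 i2.
set M := (A :&: Sm) :\ S1 :\ S2 in sP1 cP1.
have fM : forall Z, Z \in M -> [/\ Z \in A, 2 * #|Z| < n, Z != S1 & Z != S2].
  by move=> Z; rewrite !inE => /and4P [-> -> -> ->].
have hTL : setT \in A :\: Sm.
  by rewrite !inE hT cardsT card_ord andbT -leqNgt; clear -n4; lia.
have [sL cL] := split1 hTL.
have cU2 : 2 * #|U| + 2 = 2 * n by clear -cU c1 c2; lia.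
have hUL : U \in (A :\: Sm) :\ setT.
  by rewrite !inE hU hUT andbT -leqNgt; clear -cU2 n4; lia.
have [sL1 cL1] := split1 hUL.
have [sL2 cL2] := splitB ((A :\: Sm) :\ setT :\ U) QP.
set Qs := ((A :\: Sm) :\ setT :\ U) :&: QP in sL2 cL2.
set R := ((A :\: Sm) :\ setT :\ U) :\: QP in sL2 cL2.
have fQ : forall Q, Q \in Qs -> Q \in A /\ Q \in QP.
  by move=> Q; rewrite !inE => /andP [/and4P [_ _ _ ->] ->].
have gQ : forall Z, Z \in M -> Z :|: S1 \in Qs.
  move=> Z hZ; have [a b c d] := fM Z hZ.
  have [zU z1 z2 p q] := mix Z a b c d.
  have hA : Z :|: S1 \in A by apply: hu.
  have pc : #|S1| < #|Z :|: S1| := proper_card p.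
  rewrite /Qs !inE hA p q /= andbT; apply/and3P; split.
  - by apply/negP => /eqP e; move: q; rewrite e properEneq eqxx.
  - by apply/negP => /eqP e; move: (proper_trans q pUT); rewrite e properEneq eqxx.
  - have aux : forall k, #|S1| < k -> n <= 2 * k by move=> k hk; clear -hk c1; lia.
    by rewrite -leqNgt andbT; apply: aux.
have sR : n * #|R| <= 2 * sz R.
  apply: large_bound => X; rewrite !inE => /andP[_ /andP[_ /andP[_ /andP[h _]]]].
  by rewrite leqNgt.
have hM1 : n * #|M| <= 2 * sz M + 2 * \sum_(Z in M) #|S1 :\: Z|.
  rewrite /sz !big_distrr -big_split /= [n * _]mulnC -sum_nat_const.
  apply: leq_sum => Z hZ; have [a b c d] := fM Z hZ.
  have [_ _ _ p _] := mix Z a b c d.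
  have pc : #|S1| < #|Z :|: S1| := proper_card p.
  have e1 : #|Z :|: S1| + #|S1 :&: Z| = #|Z| + #|S1| by rewrite setIC cardsUI.
  have e2 : #|S1 :&: Z| + #|S1 :\: Z| = #|S1| by rewrite cardsID.
  exact: auxM pc e1 e2 c1.
have hM2 : \sum_(Z in M) #|S1 :\: Z| <= #|Qs| * #|S1|.
  rewrite (partition_big (fun Z => Z :|: S1) (fun Q => Q \in Qs)) /=; last by apply: gQ.
  rewrite -sum_nat_const; apply: leq_sum => Q hQ.
  apply: sum_compl => Z1 Z2 /andP[h1 /eqP e1] /andP[h2 /eqP e2] hne.
  have [a1 b1 c11 d1] := fM Z1 h1; have [a2 b2 c21 d2] := fM Z2 h2.
  by apply: (grp Z1 Z2) => //; rewrite e1 e2.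
have fQ' : forall Q, Q \in Qs -> [/\ Q \in A, S1 \proper Q & Q \proper U].
  by move=> Q hQ; have [a b] := fQ Q hQ; move: b; rewrite inE => /andP[p q]; split.
have qU : forall Q, Q \in Qs -> Q \subset U.
  by move=> Q hQ; have [_ _ q] := fQ' Q hQ; exact: proper_sub q.
have sQ := sz_compl qU.
have eQ : \sum_(Q in Qs) #|U :\: Q| = \sum_(Q in Qs) #|S2 :\: Q|.
  apply: eq_bigr => Q hQ; have [_ p _] := fQ' Q hQ; apply: eq_card => x.
  rewrite !inE; case: (boolP (x \in Q)) => //= hx.
  case: (boolP (x \in S1)) => //= h1.
  by move: hx; rewrite (subsetP (proper_sub p) x h1).
rewrite eQ in sQ.
have sQ2 : \sum_(Q in Qs) #|S2 :\: Q| <= #|S2|.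
  apply: sum_compl => Q1 Q2 h1 h2 hne.
  have [a1 b1] := fQ Q1 h1; have [a2 b2] := fQ Q2 h2.
  exact: qpair.
have sQ3 : #|Qs| <= \sum_(Q in Qs) #|S2 :\: Q|.
  by apply: count_le_sum => Q hQ; apply: qnot; have [_ b] := fQ Q hQ.
have hh : 2 <= #|S1| by clear -c1 n4; lia.
have cU' : #|U| = 2 * #|S1| by clear -cU c1 c2; lia.
have sQ2' : \sum_(Q in Qs) #|S2 :\: Q| <= #|S1| by clear -sQ2 c1 c2; lia.
have H := arithIIii c1 cU' hh hM1 hM2 sQ sQ2' sQ3 sR.
have eS2 : #|S2| = #|S1| by clear -c1 c2; lia.
rewrite cardsT card_ord in sL.
rewrite cA sA cP sP cP1 sP1 cL sL cL1 sL1 cL2 sL2 eS2.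
clear -H; lia.
Qed.

Lemma min_cover n (A : {set {set 'I_n}}) :
  exists S, is_calB A S /\
   forall S' : {set {set 'I_n}}, S' \subset small A -> bset S' = bset (small A) -> #|S| <= #|S'|.
Proof.
pose cov (S : {set {set 'I_n}}) := (S \subset small A) && (bset S == bset (small A)).
have cov0 : cov (small A) by rewrite /cov subxx eqxx.
case: (@arg_minnP _ (small A) cov (fun S : {set {set 'I_n}} => #|S|) cov0) => S /andP [hS1 /eqP hS2] hmin.
have hmin' : forall S' : {set {set 'I_n}}, S' \subset small A -> bset S' = bset (small A) -> #|S| <= #|S'|.
  by move=> S' h1 h2; apply: hmin; rewrite /cov h1 h2 eqxx.
exists S; split => //; split => //.
  apply/forallP => X; apply/implyP => hX; apply/negP => /eqP h0.
  have hc : cov (S :\ X).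
    rewrite /cov (subset_trans (subD1set S X) hS1) /= -hS2.
    rewrite /bset [X in _ == X](big_setD1 X hX) /=.
    apply/eqP/esym/setUidPr.
    by rewrite -setD_eq0; apply/eqP; move: h0; rewrite /irr.
  have := hmin _ hc; rewrite (cardsD1 X S) hX; lia.
by move=> S' h1 _ h3; apply: hmin'.
Qed.

Lemma auxU (n u c i s1 s2 : nat) : u + i = s1 + s2 -> u + c = n -> 2 * s1 < n ->
  2 * s2 < n -> 0 < c.
Proof. by move=> *; lia. Qed.

Lemma auxU2 (n u c i s1 s2 : nat) : u + i = s1 + s2 -> u + c = n -> 2 * s1 < n ->
  2 * s2 < n -> c <= 1 -> [/\ i = 0, 2 * s1 + 1 = n & 2 * s2 + 1 = n].
Proof. by move=> *; split; lia. Qed.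

Unset Implicit Arguments.

Theorem corollary2p2 (n : nat) (A : {set {set 'I_n}}) :
  union_closed A -> base_is_n A -> separating A ->
  height A = 4 -> 4 <= n ->
  (forall S, is_calB A S -> #|S| <= 2) ->
  exists x : 'I_n, #|A| <= 2 * #|[set X in A | x \in X]|.
Proof.
move=> huc hb hs hh n4 hB.
have hu : ucl A := huc.2.
have hT := setT_in huc hb.
have h5 := height_no5 hh.
apply: final; first by clear -n4; lia.
case: (boolP [exists Y in A, exists X in A, (2 * #|Y| < n) && (X \proper Y)]).
  case/exists_inP => Y hY /exists_inP [X hX /andP [hYs pX]].
  exact: caseI n4 hu hs hT h5 hY hYs hX pX.
move=> hNB'.
have hNB : forall Z X, Z \in A -> 2 * #|Z| < n -> X \in A -> X \proper Z -> False.
  move=> Z X hZ hZs hX pX; move/negP: hNB'; apply; apply/exists_inP; exists Z => //.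
  by apply/exists_inP; exists X => //; rewrite hZs pX.
have [S [hcal hmin]] := min_cover A.
have hS2 := hB S hcal.
case: hcal => hSs hirr hSb _.
have hsmall : forall Z, Z \in A -> 2 * #|Z| < n -> Z \subset bset S.
  move=> Z hZ hZs; rewrite hSb /bset.
  by apply: bigcup_sup; rewrite inE hZ hZs.
have n0 : 0 < n by clear -n4; lia.
move: hS2; case eS : #|S| => [|[|[|k]]] // _.
-
  apply: caseII_le1 => // Z1 Z2 h1 h2 s1 s2.
  move: (hsmall Z1 h1 s1) (hsmall Z2 h2 s2).
  rewrite (cards0_eq eS) /bset big_set0 !subset0 => /eqP -> /eqP ->. done.
-
  case/cards1P: (introT eqP eS) => S1 eS1.
  have hS1 : S1 \in small A by apply: (subsetP hSs); rewrite eS1 inE.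
  move: hS1; rewrite inE => /andP [hS1A hS1s].
  have sub : forall Z, Z \in A -> 2 * #|Z| < n -> Z = S1.
    move=> Z hZ hZs; have := hsmall Z hZ hZs; rewrite eS1 /bset big_set1 => hZ1.
    case: (eqVneq Z S1) => // hne; exfalso.
    by apply: (hNB S1 Z hS1A hS1s hZ); rewrite properEneq hne hZ1.
  apply: caseII_le1 => // Z1 Z2 h1 h2 s1 s2.
  by rewrite (sub Z1 h1 s1) (sub Z2 h2 s2).
-
  case/cards2P: (introT eqP eS) => S1 [S2 [hne eS12]].
  have hS1 : S1 \in small A by apply: (subsetP hSs); rewrite eS12 !inE eqxx.
  have hS2 : S2 \in small A by apply: (subsetP hSs); rewrite eS12 !inE eqxx orbT.
  move: hS1 hS2; rewrite !inE => /andP [hS1A hS1s] /andP [hS2A hS2s].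
  have bS : bset S = S1 :|: S2.
    by rewrite eS12 /bset big_setU1 /= ?big_set1 // inE.
  have hsub : forall Z, Z \in A -> 2 * #|Z| < n -> Z \subset S1 :|: S2.
    by move=> Z hZ hZs; rewrite -bS; apply: hsmall.
  set U := S1 :|: S2 in bS hsub.
  have hU : U \in A by apply: hu.
  have hUl : ~~ (2 * #|U| < n).
    apply/negP => hUs.
    have : #|S| <= #|[set U]|.
      apply: hmin.
        by apply/subsetP => X; rewrite !inE => /eqP ->; rewrite hU hUs.
      by rewrite -hSb bS /bset big_set1.
    by rewrite eS cards1.
  have cUI : #|U| + #|S1 :&: S2| = #|S1| + #|S2| by rewrite cardsUI.
  have cUC : #|U| + #|~: U| = n by rewrite cardsC card_ord.
  have hc0 := auxU cUI cUC hS1s hS2s.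
  have hUT : U != setT.
    by apply/negP => /eqP e; move: hc0; rewrite e setCT cards0.
  case: (ltnP 1 #|~: U|) => hc.
  + case/card_gt1P: hc => a [b [ha hb2 hab]]; rewrite !in_setC in ha hb2.
    case: (lemmaH hu hs hU hab ha hb2) => W hW [pW hab2].
    have pWT : W \proper setT.
      by rewrite properT; apply/negP => /eqP e; move: hab2; rewrite e !inE.
    apply: (caseII_i hT hU hUT).
    * by rewrite leqNgt.
    * exact: hsub.
    * move=> Z1 Z2 h1 h2 s1 s2 hZ.
      exact: (pair_v2 h5 hu hT h1 h2 hU hW pW pWT hZ (hsub _ h1 s1) (hsub _ h2 s2)).
  + have [e0 c1 c2] := auxU2 cUI cUC hS1s hS2s hc.
    apply: (caseII_ii n4 h5 hu hT hS1A hS2A (cards0_eq e0) c1 c2 hUT hsub hNB).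
Qed.
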